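(* For all $n\ge 3$, the state complexity of $((U_{\{0\},n}(a,b,c))^* )^R$ is $2^n$.
   Context: The state complexity of a regular language is the number of states of its minimal complete DFA. For $n\ge 3$, $\mathcal{U}_n(a,b,c)$ is the DFA over $\{a,b,c\}$ with states $\{0,\dots,n-1\}$ and initial state $0$, where $a$ maps $i\mapsto i+1\pmod n$, $b$ swaps $0$ and $1$ fixing other states, and $c$ maps $n-1$ to $0$ fixing other states. $U_{\{0\},n}(a,b,c)$ is the language accepted by $\mathcal{U}_n(a,b,c)$ with final state set $\{0\}$. $L^*$ is the Kleene star and $L^R$ the reversal of $L$. *)

(* Defs.v *)
From Stdlib Require Import List.
From mathcomp Require Import all_boot.
Set Implicit Arguments. Unset Strict Implicit. Unset Printing Implicit Defensive.

Inductive letter := La | Lb | Lc.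

Definition word := seq letter.
Definition language := word -> Prop.

Record dfa (k : nat) := DFA {
  dfa_init : 'I_k;
  dfa_delta : 'I_k -> letter -> 'I_k;
  dfa_final : pred 'I_k }.

Definition dfa_accepts k (A : dfa k) (w : word) : bool :=
  dfa_final A (foldl (dfa_delta A) (dfa_init A) w).

Definition recognizes k (A : dfa k) (L : language) : Prop :=
  forall w, dfa_accepts A w <-> L w.

Definition state_complexity_is (L : language) (m : nat) : Prop :=
  (exists A : dfa m, recognizes A L) /\
  (forall k (A : dfa k), recognizes A L -> m <= k).

Definition star (L : language) : language :=
  fun w => exists ws : seq word, List.Forall L ws /\ w = flatten ws.

Definition reversal (L : language) : language := fun w => L (rev w).

(* The DFA U_n(a,b,c) on states {0,...,n-1} (encoded as nats), initial 0:
   a : i -> i+1 mod n; b : swaps 0 and 1; c : n-1 -> 0, others fixed. *)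
Definition U_step (n : nat) (i : nat) (x : letter) : nat :=
  match x with
  | La => (i + 1) %% n
  | Lb => if i == 0 then 1 else if i == 1 then 0 else i
  | Lc => if i == n - 1 then 0 else i
  end.

Definition U0 (n : nat) : language :=
  fun w => foldl (U_step n) 0 w = 0.

(* Main.v *)
Require Import Defs.
From mathcomp Require Import all_boot zify.
From Stdlib Require Import ClassicalEpsilon.
Set Implicit Arguments. Unset Strict Implicit. Unset Printing Implicit Defensive.

Definition run n i (u : word) := foldl (U_step n) i u.

Lemma U_step_lt n i x : 1 < n -> i < n -> U_step n i x < n.
Proof.
move=> h1 hi; case: x => /=; first by rewrite ltn_pmod //; lia.
- by case: ifP => _; [lia| case: ifP => _; lia].
- by case: ifP => _; lia.
Qed.

Lemma run_lt n i u : 1 < n -> i < n -> run n i u < n.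
Proof. move=> h1; elim: u i => [|x u IH] i hi //=; apply: IH; exact: U_step_lt. Qed.

Definition reach n (p : nat -> bool) :=
  exists u, forall i, i < n -> (run n i u == 0) = p i.

Lemma reach_ext n p q : reach n p -> (forall i, i < n -> p i = q i) -> reach n q.
Proof. move=> [u Hu] H; exists u => i hi; rewrite Hu // H //. Qed.

Lemma reach_step n x p : 1 < n -> reach n p -> reach n (fun i => p (U_step n i x)).
Proof.
move=> h1 [u Hu]; exists (x :: u) => i hi /=; rewrite -Hu //; exact: U_step_lt.
Qed.

Arguments reach_step {n} x {p}.

Lemma reach_rot n m p : 1 < n -> reach n p -> reach n (fun i => p ((i + m) %% n)).
Proof.
move=> h1 hp; elim: m => [|m IH].
  by apply: (reach_ext hp); move=> i hi; rewrite addn0 modn_small.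
apply: (reach_ext (reach_step La h1 IH)) => i hi /=.
by rewrite modnDml addn1 addSnnS.
Qed.

Arguments reach_rot {n} m {p}.

Definition swp j i := if i == j then j.+1 else if i == j.+1 then j else i.

Lemma swpK j x : swp j (swp j x) = x.
Proof.
rewrite /swp; case: (x =P j) => [->|h1]; first by rewrite eqxx; case: ifP => //; lia.
case: (x =P j.+1) => [->|h2]; first by rewrite eqxx.
by do 2 (case: eqP => //).
Qed.

Lemma swp_id j x : x != j -> x != j.+1 -> swp j x = x.
Proof. by rewrite /swp => /negbTE -> /negbTE ->. Qed.

Lemma reach_swap n j p : 1 < n -> j.+1 < n -> reach n p -> reach n (fun i => p (swp j i)).
Proof.
move=> h1 hj hp.
have H := reach_rot (n - j) h1 (reach_step Lb h1 (reach_rot j h1 hp)).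
apply: (reach_ext H) => i hi /=.
remember ((i + (n - j)) %% n) as k eqn:Ek.
have Hk : (k + j) %% n = i.
  by rewrite Ek modnDml -addnA subnK ?modnDr ?modn_small //; lia.
case: (k =P 0) => [k0|k0].
  have ij : i = j by rewrite -Hk k0 add0n modn_small //; lia.
  by rewrite ij /swp eqxx add1n modn_small.
case: (k =P 1) => [k1|k1].
  have ij : i = j.+1 by rewrite -Hk k1 add1n modn_small.
  rewrite ij /swp eqxx; case: ifP; first lia.
  by rewrite add0n modn_small //; lia.
rewrite Hk swp_id //; apply/eqP => ij; rewrite ij in Ek.
- by apply: k0; rewrite Ek subnKC ?modnn //; lia.
- apply: k1; rewrite Ek.
  have -> : j.+1 + (n - j) = 1 + n by lia.
  by rewrite modnDr modn_small.
Qed.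

Lemma reach_Isucc n k : 1 < n -> 1 <= k < n -> reach n (fun i => i < k) ->
  reach n (fun i => i < k.+1).
Proof.
move=> h1 hk hp.
have H := reach_rot (n - 1) h1 (reach_step Lc h1 hp).
apply: (reach_ext H) => i hi /=.
case: i hi => [|i] hi.
  by rewrite add0n modn_small ?eqxx; lia.
have -> : i.+1 + (n - 1) = i + n by lia.
rewrite modnDr modn_small; last lia.
case: ifP => /eqP h; lia.
Qed.

Lemma reach_I n k : 1 < n -> 1 <= k <= n -> reach n (fun i => i < k).
Proof.
move=> h1; elim: k => [|k IH] hk; first lia.
case: k IH hk => [|k] IH hk.
  by exists [::] => i hi /=; case: i hi.
apply: reach_Isucc => //.
apply: IH; lia.
Qed.

Lemma reach_empty n : 1 < n -> reach n (fun _ => false).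
Proof.
move=> h1.
have H := reach_step Lc h1 (reach_rot 1 h1 (reach_I h1 (_ : 1 <= 1 <= n))).
apply: (reach_ext (H _)) => [|i hi /=]; first lia.
case: ifP => /eqP h; first by rewrite add0n modn_small.
rewrite modn_small; lia.
Qed.

Lemma reach_all n p0 : 1 < n -> reach n p0.
Proof.
move=> h1.
suff Q : forall m, m <= n -> forall p, (forall i, m <= i < n -> p i = false) -> reach n p.
  by apply: (Q n) => // i; lia.
elim=> [|m IHm] hm q hq.
  by apply: (reach_ext (reach_empty h1)) => i hi; rewrite hq.
case Hqm: (q m).
  2: { apply: IHm; first lia. move=> i hi; case: (i =P m) => [->//|]; move=> h; apply: hq; lia. }
have R : forall d i p, i + d.+1 = m -> (forall x, m < x < n -> p x = false) ->
   p i = false -> (forall x, i < x <= m -> p x) -> reach n p.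
  elim=> [|d IHd] i p him hs hpi ht.
    have hq' : reach n (fun x => p (swp i x)).
      apply: IHm; first lia.
      move=> x hx; case: (x =P m) => [->|hxm].
        by rewrite /swp; case: ifP; [lia | rewrite -him addn1 eqxx].
      rewrite swp_id; [apply: hs|apply/eqP|apply/eqP]; lia.
    apply: (reach_ext (@reach_swap n i _ h1 _ hq')) => [|x hx]; [lia | by rewrite swpK].
  have hq' : reach n (fun x => p (swp i x)).
    apply: (IHd i.+1) => [|x hx|| x hx].
    - lia.
    - rewrite swp_id; [apply: hs|apply/eqP|apply/eqP]; lia.
    - by rewrite /swp; case: ifP; [lia | rewrite eqxx].
    - rewrite swp_id; [apply: ht|apply/eqP|apply/eqP]; lia.
  apply: (reach_ext (@reach_swap n i _ h1 _ hq')) => [|x hx]; [lia | by rewrite swpK].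
have T : forall i, i <= m -> forall p, (forall x, m < x < n -> p x = false) ->
    (forall x, i <= x <= m -> p x) -> reach n p.
  elim=> [|i IHi] him p hs ht.
    apply: (reach_ext (reach_I h1 (_ : 1 <= m.+1 <= n))) => [|x hx]; first lia.
    case: (ltnP x m.+1) => hxm; first by rewrite ht.
    by rewrite hs //; lia.
  case Hpi: (p i).
    apply: IHi => //; first lia.
    by move=> x hx; case: (x =P i) => [->//|h]; apply: ht; lia.
  apply: (R (m - i.+1) i) => //; first lia.
apply: (T m) => // x hx.
by have -> : x = m by lia.
Qed.
From Stdlib Require Import ClassicalEpsilon.

Lemma star_U0 n w : star (U0 n) w <-> U0 n w.
Proof.
split.
  move=> [ws [H ->]]; elim: H => [|w1 ws' h1 _ IH] //=.
  by rewrite /U0 foldl_cat h1.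
by move=> h; exists [:: w]; split; [constructor | rewrite /= cats0].
Qed.

Lemma lang_iff n w : reversal (star (U0 n)) w <-> run n 0 (rev w) = 0.
Proof. by rewrite /reversal star_U0. Qed.

Lemma card_eq n : #|{set 'I_n}| = 2 ^ n.
Proof. by rewrite -cardsT -powersetT card_powerset cardsT card_ord. Qed.

Definition toI n (S : {set 'I_n}) : 'I_(2 ^ n) := cast_ord (card_eq n) (enum_rank S).
Definition ofI n (k : 'I_(2 ^ n)) : {set 'I_n} :=
  enum_val (cast_ord (esym (card_eq n)) k).
Lemma toIK n : cancel (@toI n) (@ofI n).
Proof. by move=> S; rewrite /ofI /toI cast_ordK enum_rankK. Qed.

Definition sstep n (S : {set 'I_n}) (x : letter) : {set 'I_n} :=
  [set i : 'I_n | [exists j in S, val j == U_step n i x]].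
Definition S0 n : {set 'I_n} := [set i : 'I_n | val i == 0].
Definition sfin n (S : {set 'I_n}) : bool := [exists j in S, val j == 0].

Lemma sstep_inv n w (i : 'I_n) : 1 < n ->
  (i \in foldl (@sstep n) (S0 n) w) = (run n i (rev w) == 0).
Proof.
move=> h1; elim/last_ind: w i => [|w x IH] i; first by rewrite in_set.
rewrite foldl_rcons rev_rcons in_set /=.
have hy : U_step n i x < n by apply: U_step_lt.
rewrite -(IH (Ordinal hy)) /=.
apply/existsP/idP => [[j /andP[Hj /eqP Hjy]]|H].
  by have <- : j = Ordinal hy by apply: val_inj.
by exists (Ordinal hy); rewrite H eqxx.
Qed.

Lemma sfin_inv n w : 1 < n -> sfin (foldl (@sstep n) (S0 n) w) = (run n 0 (rev w) == 0).
Proof.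
move=> h1; have h0 : 0 < n by lia.
rewrite -(sstep_inv w (Ordinal h0) h1).
apply/existsP/idP => [[j /andP[Hj /eqP Hjy]]|H].
  by have <- : j = Ordinal h0 by apply: val_inj.
by exists (Ordinal h0); rewrite H eqxx.
Qed.

Definition theDFA n : dfa (2 ^ n) :=
  DFA (toI (S0 n)) (fun k x => toI (sstep (ofI k) x)) (fun k => sfin (ofI k)).

Lemma theDFA_run n w S :
  foldl (dfa_delta (theDFA n)) (toI S) w = toI (foldl (@sstep n) S w).
Proof. by elim: w S => [|x w IH] S //=; rewrite -IH toIK. Qed.

Lemma run_nseq n j i : j < n -> run n j (nseq i La) = (j + i) %% n.
Proof.
elim: i j => [|i IH] j hj /=; first by rewrite addn0 modn_small.
rewrite IH; last by rewrite ltn_pmod //; lia.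
by rewrite modnDml addn1 addSnnS.
Qed.

Lemma run_nseq0 n i : i < n -> run n 0 (nseq i La) = i.
Proof. by move=> hi; rewrite run_nseq ?add0n ?modn_small //; lia. Qed.

Theorem theorem7 (n : nat) (hn : 3 <= n) :
  state_complexity_is (reversal (star (U0 n))) (2 ^ n).
Proof.
have h1 : 1 < n by lia.
split.
  exists (theDFA n) => w.
  rewrite lang_iff /dfa_accepts.
  rewrite [dfa_init _]/= theDFA_run /= toIK sfin_inv //.
  by split => /eqP.
move=> k A HA.
have wex : forall S : {set 'I_n}, exists w : word,
    forall i : 'I_n, (run n i (rev w) == 0) = (i \in S).
  move=> S; have [u Hu] := reach_all [fun i => [exists j in S, val j == i]] h1.
  exists (rev u) => i; rewrite revK Hu //=.
  apply/existsP/idP => [[j /andP[Hj /eqP Hjy]]|H].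
    by have <- : j = i by apply: val_inj.
  by exists i; rewrite H eqxx.
pose g S := proj1_sig (constructive_indefinite_description _ (wex S)).
have gP : forall S (i : 'I_n), (run n i (rev (g S)) == 0) = (i \in S).
  by move=> S; rewrite /g; case: constructive_indefinite_description.
pose f S := foldl (dfa_delta A) (dfa_init A) (g S).
have acc : forall S (i : 'I_n),
    dfa_final A (foldl (dfa_delta A) (f S) (nseq i La)) = (i \in S).
  move=> S i; rewrite /f -foldl_cat -gP.
  have := HA (g S ++ nseq i La); rewrite /dfa_accepts lang_iff => HH.
  apply/idP/idP => [/HH|/eqP H].
    by rewrite rev_cat rev_nseq /run foldl_cat -/(run n 0 _) run_nseq0 // => ->.
  apply/HH; rewrite rev_cat rev_nseq /run foldl_cat -/(run n 0 _) run_nseq0 //.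
have finj : injective f.
  move=> S T hST; apply/setP => i; by rewrite -!acc hST.
by rewrite -(card_eq n) -[k]card_ord; apply: leq_card finj.
Qed.
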